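(* Let $A$ be a commutative ring with $1$ and $M\in\operatorname{Sym}_n(A)$. Then $\Sigma(M)$ is an $A$-submodule of $A^n$.
   Context: $\Sigma A^2$ denotes the set of finite sums of squares of elements of $A$. A matrix $N\in\operatorname{Sym}_n(A)$ is a sum of squares if $N=Q^{t}Q$ for some $Q\in\operatorname{Mat}_{m,n}(A)$ and some $m$, equivalently $N=\sum_{i=1}^m w_iw_i^{t}$ for column vectors $w_i\in A^n$. For $M\in\operatorname{Sym}_n(A)$, $\Sigma(M)$ is the set of column vectors $v\in A^n$ such that $sM=vv^{t}+N$ for some $s\in\Sigma A^2$ and some $N\in\operatorname{Sym}_n(A)$ which is a sum of squares. *)

(* Defs.v *)
From HB Require Import structures.
From mathcomp Require Import all_boot all_order all_algebra.
Set Implicit Arguments. Unset Strict Implicit. Unset Printing Implicit Defensive.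
Import GRing.Theory.
Local Open Scope ring_scope.

Definition is_sos_elt (A : comPzRingType) (s : A) : Prop :=
  exists l : seq A, s = \sum_(a <- l) a ^+ 2.

Definition is_symmx (A : comPzRingType) (n : nat) (M : 'M[A]_n) : Prop := M^T = M.

Definition is_sos_mx (A : comPzRingType) (n : nat) (N : 'M[A]_n) : Prop :=
  exists (m : nat) (Q : 'M[A]_(m, n)), N = Q^T *m Q.

Definition Sigma (A : comPzRingType) (n : nat) (M : 'M[A]_n) (v : 'cV[A]_n) : Prop :=
  exists (s : A) (N : 'M[A]_n),
    [/\ is_sos_elt s, is_symmx N, is_sos_mx N & s *: M = v *m v^T + N].

Definition is_submodule (A : comPzRingType) (n : nat) (S : 'cV[A]_n -> Prop) : Prop :=
  [/\ S 0,
      (forall v w, S v -> S w -> S (v + w)) &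
      (forall (a : A) v, S v -> S (a *: v))].

(* Main.v *)
Require Import Defs.
From HB Require Import structures.
From mathcomp Require Import all_boot all_order all_algebra.
Import GRing.Theory.
Local Open Scope ring_scope.

Section H.
Variable A : comPzRingType.
Variable n : nat.

Lemma sos_elt0 : is_sos_elt (0 : A).
Proof. by exists [::]; rewrite big_nil. Qed.

Lemma sos_eltD (s t : A) : is_sos_elt s -> is_sos_elt t -> is_sos_elt (s + t).
Proof. by move=> [l ->] [l' ->]; exists (l ++ l'); rewrite big_cat. Qed.

Lemma sos_eltM2 (a s : A) : is_sos_elt s -> is_sos_elt (a ^+ 2 * s).
Proof.
move=> [l ->]; exists (map (fun x => a * x) l); rewrite big_map mulr_sumr.
by apply: eq_bigr => x _; rewrite exprMn.
Qed.

Lemma sos_mx0 : is_sos_mx (0 : 'M[A]_n).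
Proof. by exists 0%N, 0; rewrite mulmx0. Qed.

Lemma sos_mxD (N1 N2 : 'M[A]_n) : is_sos_mx N1 -> is_sos_mx N2 -> is_sos_mx (N1 + N2).
Proof.
move=> [m1 [Q1 ->]] [m2 [Q2 ->]]; exists (m1 + m2)%N, (col_mx Q1 Q2).
by rewrite tr_col_mx mul_row_col.
Qed.

Lemma sos_mxZ (a : A) (N : 'M[A]_n) : is_sos_mx N -> is_sos_mx (a ^+ 2 *: N).
Proof.
move=> [m [Q ->]]; exists m, (a *: Q).
have -> : (a *: Q)^T = a *: Q^T by apply/matrixP=> i j; rewrite !mxE.
by rewrite -scalemxAl -scalemxAr scalerA expr2.
Qed.

Lemma sos_mxv (v : 'cV[A]_n) : is_sos_mx (v *m v^T).
Proof. by exists 1%N, v^T; rewrite trmxK. Qed.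

Lemma sos_sym (N : 'M[A]_n) : is_sos_mx N -> is_symmx N.
Proof. by move=> [m [Q ->]]; rewrite /is_symmx trmx_mul trmxK. Qed.

End H.

Lemma idz (V : zmodType) (a b c d N1 N2 : V) :
  a + N1 + (a + N1) + (d + N2 + (d + N2)) =
  a + b + (c + d) + (a - b + (- c + d) + (N1 + N1 + (N2 + N2))).
Proof.
have E1 : a + b + (c + d) + (a - b + (- c + d)) = a + a + (d + d).
  by rewrite addrACA (addrACA a b) (addrACA c d) !subrr addr0 add0r.
rewrite [RHS]addrA E1.
by rewrite (addrACA a N1) (addrACA d N2) (addrACA (a + a)).
Qed.

Theorem lemma3p7 (A : comPzRingType) (n : nat) (M : 'M[A]_n) :
  is_symmx M -> is_submodule (Sigma M).
Proof.
move=> _; split.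
- exists 0, 0; split; [exact: sos_elt0| apply: sos_sym; exact: sos_mx0
    | exact: sos_mx0|].
  by rewrite scale0r mul0mx addr0.
- move=> v w [s1 [N1 [h1 _ q1 e1]]] [s2 [N2 [h2 _ q2 e2]]].
  have hN : is_sos_mx ((v - w) *m (v - w)^T + (N1 + N1 + (N2 + N2))).
    by apply: sos_mxD; [exact: sos_mxv|
      apply: sos_mxD; apply: sos_mxD].
  exists (s1 + s1 + (s2 + s2)), ((v - w) *m (v - w)^T + (N1 + N1 + (N2 + N2))).
  split.
  + by apply: sos_eltD; apply: sos_eltD.
  + apply: sos_sym; exact: hN.
  + exact: hN.
  have tD : forall x y : 'cV[A]_n, (x + y)^T = x^T + y^T.
    by move=> x y; apply/matrixP=> i j; rewrite !mxE.
  have tN : forall x : 'cV[A]_n, (- x)^T = - x^T.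
    by move=> x; apply/matrixP=> i j; rewrite !mxE.
  rewrite !scalerDl e1 e2 !tD !tN !mulmxDl !mulmxDr
    !mulmxN !mulNmx.
  set a := v *m v^T; set b := v *m w^T; set c := w *m v^T; set d := w *m w^T.
  have E1 : a + b + (c + d) + (a - b + (- c + d)) = a + a + (d + d).
    by rewrite addrACA (addrACA a b) (addrACA c d) !subrr addr0 add0r.
  rewrite opprK [RHS]addrA E1.
  by rewrite (addrACA a N1) (addrACA d N2) (addrACA (a + a)).


- move=> a v [s [N [h _ q e]]].
  exists (a ^+ 2 * s), (a ^+ 2 *: N); split.
  + exact: sos_eltM2.
  + apply: sos_sym; exact: sos_mxZ.
  + exact: sos_mxZ.
  have -> : (a *: v)^T = a *: v^T by apply/matrixP=> i j; rewrite !mxE.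
  rewrite -scalerA e scalerDr -scalemxAl -scalemxAr scalerA expr2.
  by [].
Qed.
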